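(* Let $E\in M_n(\mathbb{FT})$ be an idempotent of rank $n$, and let $H_E$ be its $\mathcal{H}$-class in $M_n(\mathbb{FT})$. Let $G_E$ be the set of all units $G$ of the monoid $M_n(\mathbb{T})$ which commute with $E$ (i.e. $G\otimes E=E\otimes G$). Then the map $G_E\to H_E$, $G\mapsto G\otimes E=E\otimes G$ is an isomorphism of groups.
   Context: $\mathbb{FT}$ is $\mathbb{R}$ with $a\oplus b=\max(a,b)$, $a\otimes b=a+b$; $\mathbb{T}=\mathbb{R}\cup\{-\infty\}$ with $a\oplus-\infty=a$ and $a\otimes-\infty=-\infty$. $M_n(\mathbb{FT})\subseteq M_n(\mathbb{T})$ are the sets of $n\times n$ matrices over these, under $(A\otimes B)_{i,j}=\bigoplus_k A_{i,k}\otimes B_{k,j}$; $M_n(\mathbb{T})$ is a monoid whose identity has $0$ on the diagonal and $-\infty$ elsewhere, and its units are exactly the matrices with exactly one entry different from $-\infty$ in each row and column. $C(E)$ is the subset of $\mathbb{FT}^n$ of all finite maxima of columns of $E$ shifted by real constants. The rank of an idempotent $E$ is the minimal cardinality of a generating set of $C(E)$ (as a set closed under componentwise max and adding a real constant to all coordinates). Green's relations on a semigroup $S$: $a\,\mathcal{R}\,b$ iff $aS^1=bS^1$, $a\,\mathcal{L}\,b$ iff $S^1a=S^1b$, $\mathcal{H}=\mathcal{L}\cap\mathcal{R}$; the $\mathcal H$-class of an idempotent is a group. *)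

(* Defs.v *)
From HB Require Import structures.
From mathcomp Require Import all_boot all_order all_algebra.
From mathcomp Require Import reals.
Set Implicit Arguments. Unset Strict Implicit. Unset Printing Implicit Defensive.
Import Order.TTheory GRing.Theory Num.Theory.
Local Open Scope ring_scope.

Section Tropical.
Variable R : realType.

(* T = R ∪ {-oo}, with None standing for -oo. *)
Definition trop := option R.

Definition tadd (a b : trop) : trop :=
  match a, b with
  | Some x, Some y => Some (Num.max x y)
  | None, _ => b
  | _, None => a
  end.

Definition tmul (a b : trop) : trop :=
  match a, b with
  | Some x, Some y => Some (x + y)
  | _, _ => None
  end.

Definition tmx_mul n (A B : 'M[trop]_n) : 'M[trop]_n :=
  \matrix_(i, j) \big[tadd/None]_(k < n) tmul (A i k) (B k j).

Definition tmx_id n : 'M[trop]_n :=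
  \matrix_(i, j) (if i == j then Some 0 else None).

Definition tmx_unit n (G : 'M[trop]_n) : Prop :=
  exists G', tmx_mul G G' = tmx_id n /\ tmx_mul G' G = tmx_id n.

(* M_n(FT) ⊆ M_n(T): matrices with all entries finite *)
Definition tmx_finite n (A : 'M[trop]_n) : Prop :=
  forall i j, A i j <> None.

Definition tmx_of n (E : 'M[R]_n) : 'M[trop]_n := map_mx (@Some R) E.

(* Green's relations in the subsemigroup S of M_n(T) (S^1 = S ∪ {1}) *)
Definition right_ideal n (S : 'M[trop]_n -> Prop) (a : 'M[trop]_n) (z : 'M[trop]_n) :=
  exists x, (S x \/ x = tmx_id n) /\ z = tmx_mul a x.
Definition left_ideal n (S : 'M[trop]_n -> Prop) (a : 'M[trop]_n) (z : 'M[trop]_n) :=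
  exists x, (S x \/ x = tmx_id n) /\ z = tmx_mul x a.
Definition greenR n (S : 'M[trop]_n -> Prop) a b :=
  forall z, right_ideal S a z <-> right_ideal S b z.
Definition greenL n (S : 'M[trop]_n -> Prop) a b :=
  forall z, left_ideal S a z <-> left_ideal S b z.
Definition greenH n (S : 'M[trop]_n -> Prop) a b := greenR S a b /\ greenL S a b.

Definition H_class n (E : 'M[trop]_n) (X : 'M[trop]_n) : Prop :=
  tmx_finite X /\ greenH (@tmx_finite n) X E.

Definition shiftv n (p : 'cV[R]_n * R) : 'cV[R]_n := \col_i (p.2 + p.1 i 0).
Definition vmax n (u w : 'cV[R]_n) : 'cV[R]_n := \col_i Num.max (u i 0) (w i 0).

Definition tspan n (P : 'cV[R]_n -> Prop) (v : 'cV[R]_n) : Prop :=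
  exists (p : 'cV[R]_n * R) (l : seq ('cV[R]_n * R)),
    P p.1 /\ (forall q, q \in l -> P q.1) /\
    v = foldr (fun q w => vmax (shiftv q) w) (shiftv p) l.

Definition colspace n (E : 'M[R]_n) : 'cV[R]_n -> Prop :=
  tspan (fun u => exists j, u = col j E).

Definition generates n (X : seq 'cV[R]_n) (C : 'cV[R]_n -> Prop) : Prop :=
  forall v, tspan (fun u => u \in X) v <-> C v.

Definition has_rank n (E : 'M[R]_n) (r : nat) : Prop :=
  (exists X : seq 'cV[R]_n, uniq X /\ size X = r /\ generates X (colspace E)) /\
  (forall X : seq 'cV[R]_n, generates X (colspace E) -> (r <= size (undup X))%N).

End Tropical.

(* Main.v *)
Require Import Defs.
From HB Require Import structures.
From mathcomp Require Import all_boot all_order all_algebra.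
From mathcomp Require Import reals.
From mathcomp Require Import zify ring lra.
Set Implicit Arguments. Unset Strict Implicit. Unset Printing Implicit Defensive.
Import Order.TTheory GRing.Theory Num.Theory.
Local Open Scope ring_scope.

Section Trop.
Variable R : realType.
Local Notation T := (trop R).

Lemma taddA : associative (@tadd R).
Proof. by case=> [a|] [b|] [c|] //=; rewrite maxA. Qed.
Lemma taddC : commutative (@tadd R).
Proof. by case=> [a|] [b|] //=; rewrite maxC. Qed.
Lemma tadd0 : left_id None (@tadd R).
Proof. by case. Qed.
HB.instance Definition _ := Monoid.isComLaw.Build T None (@tadd R) taddA taddC tadd0.
Lemma tmul0l : left_zero None (@tmul R). Proof. by case. Qed.
Lemma tmul0r : right_zero None (@tmul R). Proof. by case. Qed.
HB.instance Definition _ := Monoid.isMulLaw.Build T None (@tmul R) tmul0l tmul0r.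
Lemma tmulDl : left_distributive (@tmul R) (@tadd R).
Proof. by case=> [a|] [b|] [c|] //=; rewrite addr_maxl. Qed.
Lemma tmulDr : right_distributive (@tmul R) (@tadd R).
Proof. by case=> [a|] [b|] [c|] //=; rewrite addr_maxr. Qed.
HB.instance Definition _ := Monoid.isAddLaw.Build T (@tmul R) (@tadd R) tmulDl tmulDr.
Lemma tmulA : associative (@tmul R).
Proof. by case=> [a|] [b|] [c|] //=; rewrite addrA. Qed.
Lemma tmulC : commutative (@tmul R).
Proof. by case=> [a|] [b|] //=; rewrite addrC. Qed.

Lemma tmx_mulA n (A B C : 'M[T]_n) : tmx_mul A (tmx_mul B C) = tmx_mul (tmx_mul A B) C.
Proof.
apply/matrixP=> i j; rewrite !mxE.
under eq_bigr => k _ do rewrite mxE big_distrr /=.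
rewrite exchange_big /=; apply: eq_bigr => l _; rewrite mxE big_distrl /=.
by apply: eq_bigr => k _; rewrite tmulA.
Qed.

Lemma tmx_mul1 n (A : 'M[T]_n) : tmx_mul (tmx_id R n) A = A.
Proof.
apply/matrixP=> i j; rewrite !mxE (bigD1 i) //= big1 ?mxE ?eqxx.
  by case: (A i j) => //= a; rewrite add0r.
by move=> k /negbTE ki; rewrite mxE eq_sym ki.
Qed.

Lemma tmx_mul1r n (A : 'M[T]_n) : tmx_mul A (tmx_id R n) = A.
Proof.
apply/matrixP=> i j; rewrite !mxE (bigD1 j) //= big1 ?mxE ?eqxx.
  by case: (A i j) => //= a; rewrite addr0; case: (A i j).
by move=> k /negbTE ki; rewrite mxE ki tmul0r.
Qed.

Lemma big_tadd_seq (I : eqType) (r : seq I) (F : I -> T) :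
  match \big[@tadd R/None]_(i <- r) F i with
  | Some v => (forall i w, i \in r -> F i = Some w -> w <= v) /\ exists2 i, i \in r & F i = Some v
  | None => forall i, i \in r -> F i = None
  end.
Proof.
elim: r => [|a r IH]; first by rewrite big_nil.
rewrite big_cons; move: IH.
case: (\big[@tadd R/None]_(i <- r) F i) => [v [Hub [i0 Hi0 Fi0]]|Hn].
  case Fa: (F a) => [x|] /=.
    split.
      move=> i w; rewrite in_cons => /orP[/eqP->|ir]; first by rewrite Fa => -[<-]; rewrite le_max lexx.
      by move=> /(Hub _ _ ir) h; rewrite le_max h orbT.
    case: (leP x v) => h.
      by exists i0 => //; rewrite in_cons Hi0 orbT.
    by exists a => //; rewrite in_cons eqxx.
  split.
    move=> i w; rewrite in_cons => /orP[/eqP->|ir]; first by rewrite Fa.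
    exact: Hub.
  by exists i0 => //; rewrite in_cons Hi0 orbT.
case Fa: (F a) => [x|] /=.
  split.
    move=> i w; rewrite in_cons => /orP[/eqP->|ir]; first by rewrite Fa => -[<-].
    by rewrite Hn.
  by exists a => //; rewrite in_cons eqxx.
by move=> i; rewrite in_cons => /orP[/eqP->|ir] //; apply: Hn.
Qed.

Lemma bigT_some (I : finType) (F : I -> T) v :
  \big[@tadd R/None]_i F i = Some v ->
  (forall i w, F i = Some w -> w <= v) /\ exists i, F i = Some v.
Proof.
move=> H; have := big_tadd_seq (index_enum I) F; rewrite H => -[Hub [i _ Fi]].
by split; [move=> i0 w; apply: Hub; rewrite mem_index_enum | exists i].
Qed.

Lemma bigT_none (I : finType) (F : I -> T) :
  \big[@tadd R/None]_i F i = None -> forall i, F i = None.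
Proof.
move=> H i; have := big_tadd_seq (index_enum I) F; rewrite H; apply.
by rewrite mem_index_enum.
Qed.

Lemma bigT_eq (I : finType) (F : I -> T) v i0 :
  (forall i w, F i = Some w -> w <= v) -> F i0 = Some v ->
  \big[@tadd R/None]_i F i = Some v.
Proof.
move=> Hub Fi0; case H: (\big[@tadd R/None]_i F i) => [v'|].
  have [Hub' [i Fi]] := bigT_some H.
  by congr Some; apply/eqP; rewrite eq_le (Hub _ _ Fi) (Hub' _ _ Fi0).
by rewrite (bigT_none H) in Fi0.
Qed.

Lemma bigT_ub (I : finType) (F : I -> T) v i w :
  \big[@tadd R/None]_i F i = Some v -> F i = Some w -> w <= v.
Proof. by move=> /bigT_some [H _]; apply: H. Qed.


Section Span.
Variable n : nat.
Local Notation V := 'cV[R]_n.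
Local Notation f := (fun q w => vmax (shiftv q) w).

Lemma shiftv_shift (u : V) a c : shiftv (shiftv (u, a), c) = shiftv (u, c + a).
Proof. by apply/matrixP => i k; rewrite !mxE /= addrA. Qed.

Lemma shiftv_vmax (u w : V) c : shiftv (vmax u w, c) = vmax (shiftv (u, c)) (shiftv (w, c)).
Proof. by apply/matrixP => i k; rewrite !mxE /= addr_maxr. Qed.

Lemma shiftv0 (u : V) : shiftv (u, 0) = u.
Proof. by apply/matrixP => i k; rewrite !mxE /= add0r (ord1 k). Qed.

Lemma vmaxA (u v w : V) : vmax u (vmax v w) = vmax (vmax u v) w.
Proof. by apply/matrixP => i k; rewrite !mxE maxA. Qed.

Lemma shift_foldr (p : V * R) l c :
  shiftv (foldr f (shiftv p) l, c) =
  foldr f (shiftv (p.1, c + p.2)) (map (fun q => (q.1, c + q.2)) l).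
Proof.
elim: l => [|q l IH] /=; first by case: p => u a; rewrite shiftv_shift.
by rewrite shiftv_vmax IH; case: q => u a; rewrite shiftv_shift.
Qed.

Lemma foldr_vmax (u w : V) l : foldr f (vmax u w) l = vmax (foldr f u l) w.
Proof. by elim: l => [|q l IH] //=; rewrite IH vmaxA. Qed.

Lemma tspan_base (Q : V -> Prop) u : Q u -> tspan Q u.
Proof. by move=> Qu; exists (u, 0), [::]; rewrite shiftv0. Qed.

Lemma tspan_shift (Q : V -> Prop) v c : tspan Q v -> tspan Q (shiftv (v, c)).
Proof.
case=> p [l [Qp [Ql ->]]]; rewrite shift_foldr.
exists (p.1, c + p.2), (map (fun q => (q.1, c + q.2)) l); split; first exact: Qp.
split; last by [].
move=> q /mapP [q0 q0l ->] /=; exact: (Ql q0 q0l).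
Qed.

Lemma tspan_vmax (Q : V -> Prop) v w : tspan Q v -> tspan Q w -> tspan Q (vmax v w).
Proof.
case=> p [l [Qp [Ql ->]]]; case=> p' [l' [Qp' [Ql' ->]]].
exists p', (l ++ p :: l'); split; first exact: Qp'; split.
  by move=> q; rewrite mem_cat in_cons => /orP[/Ql|/orP[/eqP->|/Ql']].
by rewrite foldr_cat /= foldr_vmax.
Qed.

Lemma tspan_sub (P Q : V -> Prop) v :
  (forall u, P u -> tspan Q u) -> tspan P v -> tspan Q v.
Proof.
move=> PQ [p [l [Pp [Pl ->]]]]; elim: l Pl => [|q l IH] Pl /=.
  by case: p Pp => u a /= /PQ /tspan_shift.
apply: tspan_vmax; last by apply: IH => q' q'l; apply: Pl; rewrite in_cons q'l orbT.
by case: q Pl => u a Pl /=; apply: tspan_shift; apply: PQ; apply: (Pl (u, a)); rewrite in_cons eqxx.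
Qed.

Lemma tspan_mono (P Q : V -> Prop) v :
  (forall u, P u -> Q u) -> tspan P v -> tspan Q v.
Proof. by move=> PQ; apply: tspan_sub => u /PQ /tspan_base. Qed.

Lemma foldr_entry (p : V * R) l i :
  (forall q, q \in p :: l -> q.2 + q.1 i 0 <= (foldr f (shiftv p) l) i 0) /\
  exists2 q, q \in p :: l & (foldr f (shiftv p) l) i 0 = q.2 + q.1 i 0.
Proof.
elim: l => [|q' l [IHub [q0 q0in IHq]]] /=.
  split; last by exists p; rewrite ?mem_seq1 ?mxE.
  by move=> q; rewrite mem_seq1 => /eqP ->; rewrite mxE.
rewrite !mxE /=; split.
  move=> q; rewrite !in_cons => /or3P [/eqP->|/eqP->|ql].
  - by rewrite le_max IHub ?orbT // mem_head.
  - by rewrite le_max lexx.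
  - by rewrite le_max IHub ?orbT // in_cons ql orbT.
case: (leP (q'.2 + q'.1 i 0) (foldr f (shiftv p) l i 0)) => _.
  by exists q0 => //; move: q0in; rewrite !in_cons => /orP[->|->]; rewrite ?orbT.
by exists q'; rewrite // !in_cons eqxx orbT.
Qed.

Lemma foldr_val (p : V * R) l (w : V) :
  (forall i, (forall q, q \in p :: l -> q.2 + q.1 i 0 <= w i 0) /\
             exists2 q, q \in p :: l & w i 0 = q.2 + q.1 i 0) ->
  foldr f (shiftv p) l = w.
Proof.
move=> H; apply/matrixP => i k; rewrite (ord1 k).
have [Hub [q ql Hq]] := H i.
have [Hub' [q' ql' Hq']] := foldr_entry p l i.
apply/eqP; rewrite eq_le; apply/andP; split; [rewrite Hq'; exact: Hub | rewrite Hq; exact: Hub'].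
Qed.
End Span.

Lemma core n (E : 'M[R]_n) (j : 'I_n) (c : 'I_n -> T) :
  has_rank E n ->
  (forall i, Some (E i j) = \big[@tadd R/None]_m tmul (c m) (Some (E i m))) ->
  c j = Some 0.
Proof.
move=> [_ Hmin] H.
have Hub : forall m a i, c m = Some a -> a + E i m <= E i j.
  by move=> m a i cm; apply: (bigT_ub (esym (H i)) (i:=m)); rewrite cm.
case: (eqVneq (c j) (Some 0)) => // Hne; exfalso.
have Hex : forall i, exists m, m != j /\ exists a, c m = Some a /\ E i j = a + E i m.
  move=> i; have [_ [m Hm]] := bigT_some (esym (H i)).
  case cm: (c m) Hm => [a|] //= [Ha].
  exists m; split; last by exists a.
  apply/eqP => mj; subst m.
  have a0 : a = 0 by lra.
  by rewrite cm a0 eqxx in Hne.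
pose gen := fun m => if m == j then None else omap (fun a => (col m E, a)) (c m).
pose L := pmap gen (enum 'I_n).
pose X := [seq col m E | m <- enum 'I_n & m != j].
have LX : forall q, q \in L -> q.1 \in X /\ exists m, m != j /\ c m = Some q.2 /\ q.1 = col m E.
  move=> q; rewrite mem_pmap => /mapP [m _]; rewrite /gen.
  case: eqP => // /eqP mj; case cm: (c m) => [a|] //= [->].
  split; last by exists m.
  by apply: map_f; rewrite mem_filter mj mem_enum.
have Lin : forall m a, m != j -> c m = Some a -> (col m E, a) \in L.
  move=> m a mj cm; rewrite mem_pmap; apply/mapP; exists m; rewrite ?mem_enum //.
  by rewrite /gen (negbTE mj) cm.
have colj : tspan (fun u => u \in X) (col j E).
  have [m [mj [a [cm _]]]] := Hex j.
  have := Lin m a mj cm; case EL: L => [|p l] // _.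
  exists p, l; split; first by case: (LX p); rewrite ?EL ?mem_head.
  split.
    by move=> q ql; case: (LX q); rewrite // EL in_cons ql orbT.
  symmetry; apply: foldr_val => i; rewrite -EL; split.
    move=> q /LX [_ [m' [_ [cm' ->]]]]; rewrite !mxE; exact: Hub cm'.
  have [m' [m'j [a' [cm' Ha']]]] := Hex i.
  by exists (col m' E, a'); [exact: Lin | rewrite !mxE].
have gen_ok : generates X (colspace E).
  move=> v; split.
    by apply: tspan_mono => u /mapP [m _ ->]; exists m.
  apply: tspan_sub => u [k ->]; case: (eqVneq k j) => [->|kj]; first exact: colj.
  by apply: tspan_base; apply: map_f; rewrite mem_filter kj mem_enum.
have h1 := Hmin X gen_ok.
have h2 := size_undup X.
have h3 : size X = count (predC (pred1 j)) (enum 'I_n) by rewrite size_map size_filter.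
have h4 := count_predC (pred1 j) (enum 'I_n).
have h5 : count (pred1 j) (enum 'I_n) = 1%N by rewrite count_uniq_mem ?enum_uniq ?mem_enum.
rewrite size_enum_ord in h4.
have h6 : (size X).+1 = n by rewrite h3 -[in RHS]h4 h5. have key : forall a b : nat, a.+1 = b -> (b <= a)%N -> False by move=> a b; lia. exact: key _ _ h6 (leq_trans h1 h2).
Qed.

Lemma big_single (I : finType) (F : I -> T) i0 :
  (forall i, i != i0 -> F i = None) -> \big[@tadd R/None]_i F i = F i0.
Proof. by move=> H; rewrite (bigD1 i0) //= big1 //; case: (F i0). Qed.

Lemma idem_entry n (E : 'M[R]_n) : tmx_mul (tmx_of E) (tmx_of E) = tmx_of E ->
  forall i j, Some (E i j) = \big[@tadd R/None]_m tmul (Some (E m j)) (Some (E i m)).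
Proof.
move=> H i j; have := congr1 (fun M : 'M[T]_n => M i j) H; rewrite !mxE => <-.
by apply: eq_bigr => m _; rewrite !mxE tmulC.
Qed.

Lemma diag0 n (E : 'M[R]_n) : tmx_mul (tmx_of E) (tmx_of E) = tmx_of E ->
  has_rank E n -> forall j, E j j = 0.
Proof.
move=> Hi Hr j; have := core (c := fun m => Some (E m j)) Hr (fun i => idem_entry Hi i j).
by case.
Qed.

Lemma col_distinct n (E : 'M[R]_n) a b r : has_rank E n ->
  (forall i, E i a = r + E i b) -> a = b.
Proof.
move=> Hr H; case: (eqVneq a b) => // ab; exfalso.
suff : (if a == b then Some r else None) = Some 0 by rewrite (negbTE ab).
apply: (core (j := a) (c := fun m => if m == b then Some r else None) Hr) => i.
rewrite (big_single (i0 := b)); first by rewrite eqxx /= H.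
by move=> m /negbTE ->.
Qed.

Local Notation mxI n := (tmx_id R n).

Lemma unit_row n (K K' : 'M[T]_n) i j m :
  tmx_mul K K' = mxI n -> tmx_mul K' K = mxI n ->
  K i j <> None -> K i m <> None -> j = m.
Proof.
move=> H1 H2 Kij Kim; apply/eqP/negP => /negP jm.
have col0 : forall a, K' a i = None.
  move=> a.
  have HH : forall b, b != a -> K i b <> None -> K' a i = None.
    move=> b ba Kib; have := congr1 (fun M : 'M[T]_n => M a b) H2.
    rewrite !mxE eq_sym (negbTE ba) => /bigT_none /(_ i).
    by case: (K' a i) => // x; case: (K i b) Kib.
  case: (eqVneq j a) => [ja|ja]; last by apply: (HH j) => //; rewrite eq_sym.
  by apply: (HH m) => //; rewrite -ja eq_sym.
have := congr1 (fun M : 'M[T]_n => M i i) H1; rewrite !mxE eqxx => /bigT_some [_ [a]].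
by rewrite col0 tmul0r.
Qed.

Lemma unit_col n (K K' : 'M[T]_n) i j m :
  tmx_mul K K' = mxI n -> tmx_mul K' K = mxI n ->
  K i j <> None -> K m j <> None -> i = m.
Proof.
move=> H1 H2 Kij Kmj; apply/eqP/negP => /negP im.
have row0 : forall b, K' j b = None.
  move=> b.
  have HH : forall a, a != b -> K a j <> None -> K' j b = None.
    move=> a ab Kaj; have := congr1 (fun M : 'M[T]_n => M a b) H1.
    rewrite !mxE (negbTE ab) => /bigT_none /(_ j).
    by case: (K' j b) => // x; case: (K a j) Kaj.
  case: (eqVneq i b) => [ib|ib]; last by apply: (HH i).
  by apply: (HH m) => //; rewrite -ib eq_sym.
have := congr1 (fun M : 'M[T]_n => M j j) H2; rewrite !mxE eqxx => /bigT_some [_ [a]].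
by rewrite row0.
Qed.

Lemma unit_fin n (K K' : 'M[T]_n) : tmx_mul K K' = mxI n ->
  (forall i, exists k, K i k <> None) /\ (forall j, exists k, K' k j <> None).
Proof.
move=> H; split=> i; have := congr1 (fun M : 'M[T]_n => M i i) H; rewrite !mxE eqxx => /bigT_some [_ [k Hk]];
  by exists k; move: Hk; case: (K i k) => //; case: (K' k i).
Qed.


Lemma fin_mulL n (A B : 'M[T]_n) : (forall i, exists k, A i k <> None) ->
  tmx_finite B -> tmx_finite (tmx_mul A B).
Proof.
move=> HA HB i j; rewrite mxE => /bigT_none H; have [k Ak] := HA i.
by move: (H k) (HB k j); case: (A i k) Ak => // x _; case: (B k j).
Qed.

Lemma fin_mulR n (A B : 'M[T]_n) : tmx_finite A ->
  (forall j, exists k, B k j <> None) -> tmx_finite (tmx_mul A B).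
Proof.
move=> HA HB i j; rewrite mxE => /bigT_none H; have [k Bk] := HB j.
by move: (H k) (HA i k); case: (B k j) Bk => // x _; case: (A i k).
Qed.

Lemma fin_row n (A : 'M[T]_n) : tmx_finite A -> forall i, exists k, A i k <> None.
Proof. by move=> H i; exists i. Qed.

Lemma part1 n (Et G G' : 'M[T]_n) : tmx_finite Et -> tmx_mul Et Et = Et ->
  tmx_mul G G' = mxI n -> tmx_mul G' G = mxI n -> tmx_mul G Et = tmx_mul Et G ->
  H_class Et (tmx_mul G Et).
Proof.
move=> Ef Ei H1 H2 Hc.
have [Gr G'c] := unit_fin H1; have [G'r Gc] := unit_fin H2.
have GEf : tmx_finite (tmx_mul G Et) by apply: fin_mulL.
have G'Ef : tmx_finite (tmx_mul G' Et) by apply: fin_mulL.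
split => //; split => z; split.
- case=> x [[Sx|->] ->].
    exists (tmx_mul G x); split; first by left; apply: fin_mulL.
    by rewrite Hc tmx_mulA.
  exists (tmx_mul G Et); split; first by left.
  by rewrite tmx_mul1r tmx_mulA -Hc -tmx_mulA Ei.
- case=> x [[Sx|->] ->].
    exists (tmx_mul G' x); split; first by left; apply: fin_mulL.
    by rewrite Hc -tmx_mulA (tmx_mulA G) H1 tmx_mul1.
  exists (tmx_mul G' Et); split; first by left.
  by rewrite tmx_mul1r Hc -tmx_mulA (tmx_mulA G) H1 tmx_mul1 Ei.
- case=> x [[Sx|->] ->].
    exists (tmx_mul x G); split; first by left; apply: fin_mulR.
    by rewrite tmx_mulA.
  exists (tmx_mul G Et); split; first by left.
  by rewrite tmx_mul1 -tmx_mulA Ei.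
- case=> x [[Sx|->] ->].
    exists (tmx_mul x G'); split; first by left; apply: fin_mulR.
    by rewrite -tmx_mulA (tmx_mulA G') H2 tmx_mul1.
  exists (tmx_mul G' Et); split; first by left.
  by rewrite tmx_mul1 Hc -!tmx_mulA (tmx_mulA Et) Ei -Hc tmx_mulA H2 tmx_mul1.
Qed.

Lemma comm_inv n (Et G G' : 'M[T]_n) :
  tmx_mul G G' = mxI n -> tmx_mul G' G = mxI n -> tmx_mul G Et = tmx_mul Et G ->
  tmx_mul G' Et = tmx_mul Et G'.
Proof.
move=> H1 H2 Hc.
rewrite -[tmx_mul G' Et]tmx_mul1r -H1 tmx_mulA -(tmx_mulA G') -Hc tmx_mulA H2 tmx_mul1.
by [].
Qed.


Lemma part3 n (E : 'M[R]_n) (G1 G1' G2 G2' : 'M[T]_n) :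
  tmx_mul (tmx_of E) (tmx_of E) = tmx_of E -> has_rank E n ->
  tmx_mul G1 G1' = mxI n -> tmx_mul G1' G1 = mxI n ->
  tmx_mul G2 G2' = mxI n -> tmx_mul G2' G2 = mxI n ->
  tmx_mul G1 (tmx_of E) = tmx_mul (tmx_of E) G1 ->
  tmx_mul G2 (tmx_of E) = tmx_mul (tmx_of E) G2 ->
  tmx_mul G1 (tmx_of E) = tmx_mul G2 (tmx_of E) -> G1 = G2.
Proof.
move=> Hi Hr H11 H12 H21 H22 Hc1 Hc2 He.
set Et := tmx_of E in Hi Hc1 Hc2 He *.
pose K := tmx_mul G2' G1; pose K' := tmx_mul G1' G2.
have HK1 : tmx_mul K K' = mxI n.
  by rewrite /K /K' -tmx_mulA (tmx_mulA G1) H11 tmx_mul1.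
have HK2 : tmx_mul K' K = mxI n.
  by rewrite /K /K' -tmx_mulA (tmx_mulA G2) H21 tmx_mul1.
have Hc2' := comm_inv H21 H22 Hc2.
have EK : tmx_mul Et K = Et.
  rewrite /K tmx_mulA -Hc2' -tmx_mulA -Hc1 He tmx_mulA H22 tmx_mul1 //.
have Kd : forall j, K j j = Some 0.
  move=> j; apply: (core (c := fun m => K m j) Hr) => i.
  have := congr1 (fun M : 'M[T]_n => M i j) EK; rewrite !mxE => <-.
  by apply: eq_bigr => m _; rewrite !mxE tmulC.
have KI : K = mxI n.
  apply/matrixP => i j; rewrite [mxI n i j]mxE; case: (eqVneq i j) => [->|ij]; first exact: Kd.
  case Kij: (K i j) => [x|] //; exfalso; move/eqP: ij; apply.
  by apply: (unit_col HK1 HK2 (j := j)); [rewrite Kij | rewrite Kd].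
have : tmx_mul G2 K = G2 by rewrite KI tmx_mul1r.
by rewrite /K tmx_mulA H21 tmx_mul1.
Qed.


Lemma part4core n (E : 'M[R]_n) (X Y : 'M[T]_n) :
  tmx_mul (tmx_of E) (tmx_of E) = tmx_of E -> has_rank E n ->
  tmx_finite X ->
  tmx_mul X Y = tmx_of E -> tmx_mul Y X = tmx_of E ->
  tmx_mul (tmx_of E) X = X -> tmx_mul X (tmx_of E) = X -> tmx_mul Y (tmx_of E) = Y ->
  exists G, (exists G', tmx_mul G G' = mxI n /\ tmx_mul G' G = mxI n) /\
    tmx_mul G (tmx_of E) = tmx_mul (tmx_of E) G /\ tmx_mul G (tmx_of E) = X.
Proof.
move=> Hi Hr HX HXY HYX HEX HXE HYE.
have d0 := diag0 Hi Hr.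
pose xr i k := odflt 0 (X i k).
have Xr : forall i k, X i k = Some (xr i k).
  by move=> i k; rewrite /xr; case: (X i k) (HX i k).
have entry : forall (A B C : 'M[T]_n), tmx_mul A B = C ->
    forall i j, \big[@tadd R/None]_m tmul (A i m) (B m j) = C i j.
  by move=> A B C <- i j; rewrite mxE.
have EtE : forall i j, tmx_of E i j = Some (E i j) by move=> i j; rewrite mxE.
pose P j k := [forall i, X i k == Some (E i j + xr j k)].
have HB : forall j, exists k, P j k.
  move=> j; have := entry _ _ _ HXY j j; rewrite EtE d0 => /bigT_some [_ [k]].
  rewrite Xr; case Ykj: (Y k j) => [b|] //= [Hab].
  exists k; apply/forallP => i; apply/eqP; rewrite Xr; congr Some.
  have h1 : xr i k + b <= E i j.
    by apply: (bigT_ub (F := fun m => tmul (X i m) (Y m j)) (i := k)); [rewrite (entry _ _ _ HXY) EtE | rewrite /= Xr Ykj].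
  have h2 : E i j + xr j k <= xr i k.
    by apply: (bigT_ub (F := fun m => tmul (tmx_of E i m) (X m k)) (i := j)); [rewrite (entry _ _ _ HEX) Xr | rewrite /= EtE Xr].
  lra.
pose phi j := odflt j [pick k | P j k].
have Pphi : forall j, P j (phi j).
  move=> j; rewrite /phi; case: pickP => [k //|H]; have [k Hk] := HB j.
  by rewrite H in Hk.
pose al j := xr j (phi j).
have Xphi : forall i l, X i (phi l) = Some (E i l + al l).
  by move=> i l; move/forallP: (Pphi l) => /(_ i) /eqP.
have xrphi : forall i l, xr i (phi l) = E i l + al l by move=> i l; rewrite /xr Xphi.
have phi_inj : injective phi.
  move=> j j' e; apply: (col_distinct (r := al j' - al j) Hr) => i.
  have := Xphi i j; rewrite e Xphi => -[h]; lra.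
have [psi phiK psiK] := injF_bij phi_inj.
have YE' : forall i l, \big[@tadd R/None]_m tmul (Y i m) (Some (E m l)) = Y i l.
  by move=> i l; rewrite -(entry _ _ _ HYE); apply: eq_bigr => m _; rewrite EtE.
have Yv : forall i l, Y i l = Some (E i (phi l) - al l).
  move=> i l; have := entry _ _ _ HYX i (phi l).
  under eq_bigr => m _ do rewrite Xphi (_ : Some (E m l + al l) = tmul (Some (E m l)) (Some (al l))) // tmulA.
  rewrite -big_distrl /= YE' EtE; case: (Y i l) => //= y [h]; congr Some; lra.
have key1 : forall j l, al l + E j l <= al j + E (phi j) (phi l).
  move=> j l.
  have h : E (phi j) (phi j) - al j + E j l <= E (phi j) (phi l) - al l.
    apply: (bigT_ub (F := fun m => tmul (Y (phi j) m) (Some (E m l))) (i := j)).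
      by rewrite YE' Yv.
    by rewrite /= Yv.
  by rewrite d0 in h; lra.
have key2 : forall j k, al j + E (phi j) k <= xr j k.
  move=> j k.
  have h : E j j + al j + E (phi j) k <= xr j k.
    apply: (bigT_ub (F := fun m => tmul (X j m) (tmx_of E m k)) (i := phi j)).
      by rewrite (entry _ _ _ HXE) Xr.
    by rewrite /= Xphi EtE.
  by rewrite d0 add0r in h.
pose G : 'M[T]_n := \matrix_(a, b) if b == phi a then Some (al a) else None.
pose G' : 'M[T]_n := \matrix_(a, b) if a == phi b then Some (- al b) else None.
have GE : tmx_mul G (tmx_of E) = X.
  apply/matrixP => j k; rewrite mxE (big_single (i0 := phi j)); last first.
    by move=> m /negbTE h; rewrite !mxE h.
  rewrite !mxE eqxx /= -(psiK k) Xphi; congr Some.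
  have := key1 j (psi k); have := key2 j (phi (psi k)); rewrite xrphi => h1 h2; lra.
have EG : tmx_mul (tmx_of E) G = X.
  apply/matrixP => i k; rewrite mxE (big_single (i0 := psi k)); last first.
    move=> m /negP mk; rewrite !mxE; case: eqP => // e; exfalso; apply: mk.
    by rewrite e phiK.
  rewrite !mxE psiK eqxx /= -[in RHS](psiK k) Xphi; congr Some; lra.
exists G; split; last by split; [rewrite GE EG | exact: GE].
exists G'; split.
  apply/matrixP => a b; rewrite [RHS]mxE mxE (big_single (i0 := phi a)); last first.
    by move=> m /negbTE h; rewrite !mxE h.
  rewrite !mxE eqxx (inj_eq phi_inj); case: (eqVneq a b) => [->|ab] //=.
  by congr Some; lra.
apply/matrixP => a b; rewrite [RHS]mxE mxE (big_single (i0 := psi a)); last first.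
  move=> m /negP mk; rewrite !mxE; case: eqP => // e; exfalso; apply: mk.
  by rewrite e phiK.
rewrite !mxE psiK eqxx /=; case: (eqVneq b a) => [_|ba] /=.
  by congr Some; lra.
by [].
Qed.

End Trop.

Unset Implicit Arguments.
Set Strict Implicit.

Theorem theorem7p3 (R : realType) (n : nat) (E : 'M[R]_n) :
  tmx_mul (tmx_of E) (tmx_of E) = tmx_of E ->
  has_rank E n ->
  let Et := tmx_of E in
  let G_E := fun G : 'M[trop R]_n => tmx_unit G /\ tmx_mul G Et = tmx_mul Et G in
  (* the map is well defined: lands in H_E, and G ⊗ E = E ⊗ G *)
  (forall G, G_E G -> H_class Et (tmx_mul G Et)) /\
  (* it is a group homomorphism *)
  (forall G1 G2, G_E G1 -> G_E G2 ->
     tmx_mul (tmx_mul G1 G2) Et = tmx_mul (tmx_mul G1 Et) (tmx_mul G2 Et)) /\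
  (* injective on G_E *)
  (forall G1 G2, G_E G1 -> G_E G2 -> tmx_mul G1 Et = tmx_mul G2 Et -> G1 = G2) /\
  (* surjective onto H_E *)
  (forall X, H_class Et X -> exists G, G_E G /\ tmx_mul G Et = X).
Proof.
move=> Hi Hr Et G_E.
have Ef : tmx_finite Et by move=> i j; rewrite /Et mxE.
split; [|split; [|split]].
- by move=> G [[G' [H1 H2]] Hc]; apply: part1 Ef Hi H1 H2 Hc.
- move=> G1 G2 [_ Hc1] [_ Hc2].
  by rewrite -!tmx_mulA (tmx_mulA Et G2) -Hc2 -tmx_mulA Hi.
- move=> G1 G2 [[G1' [H11 H12]] Hc1] [[G2' [H21 H22]] Hc2] He.
  exact: part3 Hi Hr H11 H12 H21 H22 Hc1 Hc2 He.
move=> X [HX [HR HL]].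
have [a [_ Xa]] : right_ideal (@tmx_finite R n) Et X.
  by apply/(HR X).1; exists (tmx_id R n); split; [right | rewrite tmx_mul1r].
have [b [_ Eb]] : right_ideal (@tmx_finite R n) X Et.
  by apply/(HR Et).2; exists (tmx_id R n); split; [right | rewrite tmx_mul1r].
have [c [_ Xc]] : left_ideal (@tmx_finite R n) Et X.
  by apply/(HL X).1; exists (tmx_id R n); split; [right | rewrite tmx_mul1].
have [d [_ Ed]] : left_ideal (@tmx_finite R n) X Et.
  by apply/(HL Et).2; exists (tmx_id R n); split; [right | rewrite tmx_mul1].
have HEX : tmx_mul Et X = X by rewrite Xa tmx_mulA Hi.
have HXE : tmx_mul X Et = X by rewrite Xc -tmx_mulA Hi.
pose Y := tmx_mul Et b.
have HXY : tmx_mul X Y = Et by rewrite /Y tmx_mulA HXE -Eb.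
have HYd : Y = tmx_mul d Et by rewrite /Y {1}Ed -tmx_mulA -Eb.
have HYX : tmx_mul Y X = Et by rewrite HYd -tmx_mulA HEX -Ed.
have HYE : tmx_mul Y Et = Y by rewrite HYd -tmx_mulA Hi.
have [G [[G' [H1 H2]] [Hc HG]]] := part4core Hi Hr HX HXY HYX HEX HXE HYE.
by exists G; split; [split; [exists G' | exact: Hc] | exact: HG].
Qed.
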